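(* Let $m,q\ge1$ and let $r=(r_1,\dots,r_q)$ with $r_1,\dots,r_q$ i.i.d. $\mathrm{Exp}(1)$. For any distributions $\mu_1,\dots,\mu_m\in\Delta_q$, $$\mathbb P_r\big[\exists i,j\in[m]:\ \mathrm{GumbelTrick}(\mu_i,r)\ne\mathrm{GumbelTrick}(\mu_j,r)\big]\le\frac{\sum_{x\in[q]}\big(\max_{i\in[m]}\mu_i(x)-\min_{i\in[m]}\mu_i(x)\big)}{\sum_{x\in[q]}\max_{i\in[m]}\mu_i(x)}.$$
   Context: $\Delta_q$ is the probability simplex on $[q]$. $\mathrm{GumbelTrick}(\nu,r)$ outputs $\arg\min\{r_x/\nu(x): x\in[q]\}$ (with $r_x/0=+\infty$; ties occur with probability zero). *)

(* Defs.v *)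
From HB Require Import structures.
From mathcomp Require Import all_boot all_order all_algebra.
From mathcomp Require Import all_classical all_reals all_analysis.
Set Implicit Arguments. Unset Strict Implicit. Unset Printing Implicit Defensive.
Import Order.TTheory GRing.Theory Num.Theory.
Local Open Scope classical_set_scope.
Local Open Scope ring_scope.

Definition in_simplex (R : realType) (T : finType) (nu : T -> R) : Prop :=
  (forall x, 0 <= nu x) /\ \sum_(x : T) nu x = 1.

Definition gumbel_key (R : realType) (T : finType) (nu r : T -> R) (x : T)
  : \bar R :=
  if nu x == 0 then +oo%E else (r x / nu x)%:E.

(* GumbelTrick(nu, r) = argmin_x r_x / nu(x); ties (a probability-zero event)
   are resolved by an arbitrary fixed choice ([pick]).  For nonempty T the
   result is always [Some _]. *)
Definition GumbelTrick (R : realType) (T : finType) (nu r : T -> R) : option T :=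
  [pick x | [forall y, (gumbel_key nu r x <= gumbel_key nu r y)%E]].

Definition mutually_independent d (T : measurableType d) (R : realType)
  (P : probability T R) (I : finType) (X : I -> T -> R) : Prop :=
  forall (J : {set I}) (B : I -> set R),
    (forall i, measurable (B i)) ->
    P (\bigcap_(i in [set` J]) (X i @^-1` B i)) =
    (\prod_(i in J) P (X i @^-1` B i))%E.

Definition has_exponential_law d (T : measurableType d) (R : realType)
  (P : probability T R) (rate : R) (X : T -> R) : Prop :=
  measurable_fun setT X /\
  forall A : set R, measurable A -> P (X @^-1` A) = exponential_prob rate A.

(* Main.v *)
Require Import Defs.
From HB Require Import structures.
From mathcomp Require Import all_boot all_order all_algebra.
From mathcomp Require Import all_classical all_reals all_analysis.
From mathcomp Require Import lra ring measurable_realfun.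
Import Order.TTheory GRing.Theory Num.Theory.
Local Open Scope classical_set_scope.
Local Open Scope ring_scope.
Lemma expN_lb (R : realType) (y : R) : 0 <= y -> y * (1 - y) <= 1 - expR (- y).
Proof.
move=> y0.
have h := expR_ge1Dx y.
have E0 : 0 < expR (- y) by exact: expR_gt0.
have EF : expR (- y) * expR y = 1 by rewrite -expRD addNr expR0.
have q0 : 0 <= 1 - y + y * y by nra.
have : expR (- y) <= 1 - y + y * y.
  have h1 : expR (- y) * ((1 + y) * (1 - y + y * y)) <= expR (- y) * (expR y * (1 - y + y*y)).
    by apply: ler_wpM2l; [exact: ltW | exact: ler_wpM2r].
  rewrite [X in _ <= X]mulrA EF mul1r in h1.
  have : expR (- y) <= expR (- y) * ((1 + y) * (1 - y + y * y)).
    rewrite -[X in X <= _]mulr1; apply: ler_wpM2l; first exact: ltW.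
    have : 0 <= y * y * y by rewrite !mulr_ge0.
    have -> : (1 + y) * (1 - y + y * y) = 1 + y * y * y by ring.
    lra.
  lra.
lra.
Qed.
Lemma geo (R : realType) (a c de eta : R) (K : nat) :
  0 <= a -> 0 <= c -> 0 < de -> 0 < eta ->
  (eta * (a + c) * de)^-1 < K%:R ->
  a / (a + c) - a * de - eta <=
  \sum_(k < K) (expR (- (a * (k%:R * de))) - expR (- (a * (k.+1%:R * de))))
               * expR (- (c * (k.+1%:R * de))).
Proof.
move=> a0 c0 d0 e0 HK.
have [->|apos] := eqVneq a 0.
  rewrite big1; last by move=> k _; rewrite !mul0r oppr0 subrr mul0r.
  rewrite mul0r mul0r; lra.
have {apos} apos : 0 < a by rewrite lt_def apos a0.
set b := a + c.
have bpos : 0 < b by rewrite /b; lra.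
set u := expR (- (b * de)).
set C := expR (- (c * de)) - expR (- (b * de)).
have term : forall k : nat,
  (expR (- (a * (k%:R * de))) - expR (- (a * (k.+1%:R * de))))
               * expR (- (c * (k.+1%:R * de))) = C * u ^+ k.
  move=> k; rewrite mulrBl -!expRD /C /u -expRM_natl mulrBl -!expRD -natr1.
  congr (expR _ - expR _); rewrite /b; ring.
under eq_bigr do rewrite term.
rewrite -mulr_sumr.
have u1 : u < 1 by rewrite /u expR_lt1 oppr_lt0 mulr_gt0.
have u0 : 0 < u by exact: expR_gt0.
have geoE : \sum_(k < K) u ^+ k = (1 - u ^+ K) / (1 - u).
  apply: (@mulIf _ (1 - u)); first by rewrite subr_eq0 eq_sym (lt_eqF u1).
  rewrite mulfVK ?subr_eq0 ?(eq_sym 1) ?(lt_eqF u1) //.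
  have h := subrX1 u K.
  by rewrite -[1 - u]opprB mulrN mulrC -h opprB.
rewrite geoE.
have omu : 0 < 1 - u by lra.
have omub : 1 - u <= b * de.
  have := expR_ge1Dx (- (b * de)); rewrite -/u; lra.
have Cle : C <= 1 - u.
  rewrite /C -/u; have : expR (- (c * de)) <= 1.
    by rewrite expR_le1 oppr_le0 mulr_ge0 // ltW.
  lra.
have Cge : a * de * (1 - b * de) <= C.
  have hc := expR_ge1Dx (- (c * de)).
  have hA := @expN_lb _ _ (mulr_ge0 (ltW apos) (ltW d0)).
  have -> : C = expR (- (c * de)) * (1 - expR (- (a * de))).
    by rewrite /C mulrBr mulr1 -expRD /b; congr (_ - expR _); ring.
  have ec : 0 < expR (- (c * de)) by exact: expR_gt0.
  have cd : 0 <= c * de by rewrite mulr_ge0 // ltW.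
  have ad : 0 <= a * de by rewrite mulr_ge0 // ltW.
  have hA0 : 0 <= 1 - expR (- (a * de)).
    by rewrite subr_ge0 expR_le1 oppr_le0.
  have [hx|hx] := lerP 0 (1 - b * de); last first.
    have : a * de * (1 - b * de) <= 0.
      by rewrite mulr_ge0_le0 //; lra.
    have : 0 <= expR (- (c * de)) * (1 - expR (- (a * de))) by rewrite mulr_ge0 // ltW.
    lra.
  have h1 : (1 - c * de) * (a * de * (1 - a * de)) <=
            expR (- (c * de)) * (1 - expR (- (a * de))).
    apply: ler_pM => //; first by rewrite /b mulrDl in hx; lra.
      by rewrite mulr_ge0 //; rewrite /b mulrDl in hx; lra.
  have : a * de * (1 - b * de) <= (1 - c * de) * (a * de * (1 - a * de)).
    rewrite /b; nra.
  lra.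
set Q := C / (1 - u).
have QE : Q * (1 - u) = C by rewrite /Q mulfVK // gt_eqF.
have C0 : 0 <= C.
  by rewrite /C subr_ge0 ler_expR lerN2 ler_pM2r // /b; lra.
have Q0 : 0 <= Q by rewrite /Q divr_ge0 // ltW.
have Q1 : Q <= 1 by rewrite /Q ler_pdivrMr // mul1r.
have Qge : a / b - a * de <= Q.
  rewrite -(@ler_pM2l _ b) // mulrBr mulrCA mulfV ?gt_eqF // mulr1.
  have : a * de * (1 - b * de) <= Q * (b * de) by
    apply: (le_trans Cge); rewrite -QE; apply: ler_wpM2l.
  move=> h; rewrite -(@ler_pM2r _ de) //; nra.
have uK : u ^+ K <= eta.
  rewrite /u -expRM_natl.
  have hK := expR_ge1Dx (K%:R * (b * de)).
  have -> : K%:R * - (b * de) = - (K%:R * (b * de)) by ring.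
  rewrite expRN.
  have ebd : 0 < eta * b * de by rewrite !mulr_gt0.
  have H1 : 1 < K%:R * (eta * b * de).
    by move: HK; rewrite -/b => HK; rewrite -(ltr_pM2r ebd) mulVf ?gt_eqF in HK.
  rewrite -[_^-1]mul1r ler_pdivrMr ?expR_gt0 //.
  have : eta * (1 + K%:R * (b * de)) <= eta * expR (K%:R * (b * de)).
    by rewrite ler_pM2l.
  rewrite (_ : K%:R * (eta * b * de) = eta * (K%:R * (b * de))) in H1; last by ring.
  move: H1; set z := K%:R * (b * de); nra.
have uK0 : 0 <= u ^+ K by rewrite exprn_ge0 // ltW.
rewrite mulrCA -/Q mulrBl mul1r.
have : u ^+ K * Q <= u ^+ K by rewrite -{2}[u ^+ K]mulr1 ler_wpM2l.
lra.
Qed.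
Lemma mpre d (Omega : measurableType d) (R : realType) (X : Omega -> R) (A : set R) :
  measurable_fun setT X -> measurable A -> measurable (X @^-1` A).
Proof. by move=> mX mA; rewrite -[X @^-1` A]setTI; apply: mX. Qed.

Lemma cdf_pos d (Omega : measurableType d) (R : realType) (P : probability Omega R)
  (X : Omega -> R) : has_exponential_law P 1 X -> forall t, 0 < t ->
  P (X @^-1` `]-oo, t]%classic) = (1 - (expR (- t))%:E)%E.
Proof.
move=> [mX law] t t0.
have -> : `]-oo, t]%classic = `]-oo, (0:R)[%classic `|` `[(0:R), t]%classic.
  apply/seteqP; split => x /=; rewrite !in_itv /=.
    by move=> xt; case: (ltP x 0) => x0; [left|right; rewrite xt].
  by case=> [x0|/andP[_ //]]; apply: ltW; apply: (lt_trans x0).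
rewrite preimage_setU.
have HU : P (X @^-1` `]-oo, (0:R)[%classic `|` X @^-1` `[(0:R), t]%classic) =
    (P (X @^-1` `]-oo, (0:R)[%classic) + P (X @^-1` `[(0:R), t]%classic)).
  apply: measureU; [exact: mpre|exact: mpre|].
  rewrite -preimage_setI; apply/seteqP; split => // x /=.
  rewrite !in_itv /= => -[x0 /andP[x0' _]].
  by move: x0'; rewrite leNgt x0.
rewrite HU.
have E1 : P (X @^-1` `]-oo, (0:R)[%classic) = 0%E.
  rewrite law // /exponential_prob integral0_eq //.
  by move=> x /=; rewrite in_itv /= => x0; rewrite lt0_exponential_pdf.
rewrite E1 add0e law // exponential_prob_itv0c //.
by rewrite mulNr mul1r.
Qed.

Lemma cdf d (Omega : measurableType d) (R : realType) (P : probability Omega R)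
  (X : Omega -> R) : has_exponential_law P 1 X -> forall t, 0 <= t ->
  P (X @^-1` `]-oo, t]%classic) = (1 - expR (- t))%:E.
Proof.
move=> hX t; rewrite le_eqVlt => /orP[/eqP<-|t0]; last first.
  by rewrite cdf_pos // EFinB.
rewrite oppr0 expR0 subrr.
have mX := hX.1.
apply/eqP; rewrite eq_le measure_ge0 andbT.
apply/lee_addgt0Pr => e e0; rewrite add0e.
apply: (@le_trans _ _ (P (X @^-1` `]-oo, e]%classic))).
  apply: le_measure; rewrite ?inE; try exact: mpre.
  by move=> x /=; rewrite !in_itv /= => x0; apply: (le_trans x0); exact: ltW.
rewrite cdf_pos // lee_fin.
have := expR_ge1Dx (- e); lra.
Qed.

Lemma tail d (Omega : measurableType d) (R : realType) (P : probability Omega R)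
  (X : Omega -> R) : has_exponential_law P 1 X -> forall t, 0 <= t ->
  P (X @^-1` ~` `]-oo, t]%classic) = (expR (- t))%:E.
Proof.
move=> hX t t0; rewrite preimage_setC probability_setC; last first.
  by apply: (mpre _ _ _ X (`]-oo, t]%classic)); [exact: hX.1|exact: measurable_itv].
by rewrite cdf // -EFinB opprB addrC subrK.
Qed.

Lemma itvprob d (Omega : measurableType d) (R : realType) (P : probability Omega R)
  (X : Omega -> R) : has_exponential_law P 1 X -> forall a b, 0 <= a -> a <= b ->
  P (X @^-1` `]a, b]%classic) = (expR (- a) - expR (- b))%:E.
Proof.
move=> hX a b a0 ab.
have mX := hX.1.
have HU : P (X @^-1` `]-oo, a]%classic `|` X @^-1` `]a, b]%classic) =
    (P (X @^-1` `]-oo, a]%classic) + P (X @^-1` `]a, b]%classic))%E.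
  apply: measureU; [exact: mpre|exact: mpre|].
  rewrite -preimage_setI; apply/seteqP; split => // x /=.
  rewrite !in_itv /= => -[x0 /andP[x0' _]].
  by move: x0'; rewrite ltNge x0.
rewrite -preimage_setU in HU.
have SE : `]-oo, a]%classic `|` `]a, b]%classic = `]-oo, b]%classic.
  apply/seteqP; split => x /=; rewrite !in_itv /=.
    by case=> [xa|/andP[_ //]]; apply: (le_trans xa).
  by move=> xb; case: (leP x a) => xa; [left|right; rewrite xb].
rewrite SE !cdf // ?(le_trans a0) // in HU.
have fin : P (X @^-1` `]a, b]%classic) \is a fin_num by rewrite fin_num_measure //; exact: mpre.
rewrite -(fineK fin) -EFinD in HU.
have HU2 := EFin_inj HU.
rewrite -(fineK fin); congr (_%:E); lra.
Qed.
Lemma meas_finpred d (Omega : measurableType d) (K : finType) (E : K -> set Omega)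
  (Phi : {ffun K -> bool} -> Prop) :
  (forall k, measurable (E k)) ->
  measurable [set w | Phi [ffun k => `[< E k w >]]].
Proof.
move=> mE.
have -> : [set w | Phi [ffun k => `[< E k w >]]] =
  \bigcup_(v in [set v | Phi v]) \bigcap_(k in [set: K])
     (if v k then E k else ~` E k).
  apply/seteqP; split => w /=.
    move=> Hw; exists [ffun k => `[< E k w >]] => // k _.
    by rewrite ffunE; case: asboolP.
  move=> [v Hv Hw]; suff -> : [ffun k => `[< E k w >]] = v by [].
  apply/ffunP => k; rewrite ffunE; have := Hw k I.
  by case: (v k) => /=; case: asboolP.
apply: fin_bigcup_measurable; first exact: finite_finset.
move=> v _; apply: fin_bigcap_measurable; first exact: finite_finset.
by move=> k _; case: (v k) => //; apply: measurableC.
Qed.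

Lemma meas_key d (Omega : measurableType d) (R : realType) (q : nat)
  (rr : 'I_q -> Omega -> R) (hr : forall y, measurable_fun setT (rr y))
  (nu : 'I_q -> R) x y :
  measurable [set w | (gumbel_key nu (fun z => rr z w) x <=
                       gumbel_key nu (fun z => rr z w) y)%E].
Proof.
rewrite /gumbel_key; case: (nu x == 0); case: (nu y == 0) => /=.
- have -> : [set w : Omega | (+oo <= +oo :> \bar R)%E] = setT.
    by apply/seteqP; split => w //= _; rewrite leey.
  exact: measurableT.
- have -> : [set w : Omega | (+oo <= (rr y w / nu y)%:E)%E] = set0.
    by apply/seteqP; split => w //=; rewrite leye_eq.
  exact: measurable0.
- have -> : [set w : Omega | ((rr x w / nu x)%:E <= +oo)%E] = setT.
    by apply/seteqP; split => w //= _; rewrite leey.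
  exact: measurableT.
- have mf : measurable_fun setT (fun w => rr x w / nu x).
    by apply: measurable_funM => //; exact: measurable_cst.
  have mg : measurable_fun setT (fun w => rr y w / nu y).
    by apply: measurable_funM => //; exact: measurable_cst.
  have mT : measurable [set true] by [].
  have := measurable_fun_ler mf mg measurableT mT.
  rewrite setTI.
  have -> : [set w | ((rr x w / nu x)%:E <= (rr y w / nu y)%:E)%E] =
     (fun w => rr x w / nu x <= rr y w / nu y) @^-1` [set true] by [].
  by [].
Qed.

Lemma meas_D d (Omega : measurableType d) (R : realType) (m q : nat)
  (rr : 'I_q -> Omega -> R) (hr : forall y, measurable_fun setT (rr y))
  (mu : 'I_m -> 'I_q -> R) :
  measurable [set w | exists i j : 'I_m,
        GumbelTrick (mu i) (fun x => rr x w) <> GumbelTrick (mu j) (fun x => rr x w)].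
Proof.
pose E (kk : 'I_m * ('I_q * 'I_q)) := [set w | (gumbel_key (mu kk.1) (fun z => rr z w) kk.2.1 <=
                       gumbel_key (mu kk.1) (fun z => rr z w) kk.2.2)%E].
pose pk (v : {ffun 'I_m * ('I_q * 'I_q) -> bool}) i := [pick x | [forall y, v (i, (x, y))]].
have eqpk : forall w i, pk [ffun kk => `[< E kk w >]] i = GumbelTrick (mu i) (fun x => rr x w).
  move=> w i; rewrite /GumbelTrick /pk; apply: eq_pick => x /=.
  by apply: eq_forallb => y; rewrite ffunE asboolb.
have -> : [set w | exists i j : 'I_m,
        GumbelTrick (mu i) (fun x => rr x w) <> GumbelTrick (mu j) (fun x => rr x w)] =
   [set w | (fun v => exists i j, pk v i <> pk v j) [ffun kk => `[< E kk w >]]].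
  by apply/seteqP; split => w /= [i [j H]]; exists i, j; rewrite ?eqpk in H *.
exact: (@meas_finpred d Omega _ E (fun v => exists i j, pk v i <> pk v j) (fun kk => meas_key d Omega R q rr hr (mu kk.1) kk.2.1 kk.2.2)).
Qed.
Lemma gt_some (R : realType) (q : nat) (nu rr : 'I_q -> R) x :
  (forall y, y != x -> (gumbel_key nu rr x < gumbel_key nu rr y)%E) ->
  GumbelTrick nu rr = Some x.
Proof.
move=> H; rewrite /GumbelTrick; case: pickP => [z /forallP Hz|H0].
  case: (eqVneq z x) => [->//|zx].
  have := Hz x; have := H z zx; rewrite leNgt => ->; done.
exfalso; have := H0 x; rewrite /=; move/negP; apply; apply/forallP => y.
case: (eqVneq y x) => [->//|yx]; exact: ltW (H y yx).
Qed.

Lemma key_lt (R : realType) (q : nat) (nu rr M : 'I_q -> R) x (a t : R) :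
  0 < a -> a <= nu x -> (forall y, nu y <= M y) -> (forall y, 0 <= nu y) ->
  0 < t -> 0 <= rr x -> rr x <= a * t -> (forall y, y != x -> M y * t < rr y) ->
  forall y, y != x -> (gumbel_key nu rr x < gumbel_key nu rr y)%E.
Proof.
move=> a0 ax hM h0 t0 rx0 rxt hy y yx.
have nx0 : 0 < nu x by exact: lt_le_trans ax.
rewrite /gumbel_key (negbTE (lt0r_neq0 nx0)).
have k1 : rr x / nu x <= t.
  rewrite ler_pdivrMr // (le_trans rxt) // mulrC ler_pM2l //.
have hyy := hy y yx.
case: ifP => [/eqP ny0|/negbT ny0]; first by rewrite ltey.
have ny : 0 < nu y by rewrite lt_def ny0 h0.
rewrite lte_fin (le_lt_trans k1) // ltr_pdivlMr //.
apply: le_lt_trans hyy; rewrite mulrC ler_pM2r //.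
Qed.

Lemma in_bigsetU (T : Type) n (F : 'I_n -> set T) w :
  (\big[setU/set0]_(i < n) F i) w <-> exists i, F i w.
Proof.
split.
  apply: (big_ind (fun S : set T => S w -> exists i, F i w)) => //.
    by move=> S1 S2 h1 h2 [/h1|/h2].
  by move=> i _ h; exists i.
by move=> [i Hi]; rewrite (bigD1 i) //=; left.
Qed.

Lemma nat_lt (R : realType) (a de : R) (i j : nat) : 0 < a -> 0 < de ->
  a * (i%:R * de) < a * (j%:R * de) -> (i < j)%N.
Proof. by move=> a0 d0; rewrite ltr_pM2l // ltr_pM2r // ltr_nat. Qed.

Lemma div_mono (R : realType) (a c s : R) : 0 <= a -> 0 <= c -> a + c <= s ->
  a / s <= a / (a + c).
Proof.
move=> a0 c0 h.
have [->|an] := eqVneq a 0; first by rewrite !mul0r.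
have ap : 0 < a by rewrite lt_def an a0.
rewrite ler_pM2l // lef_pV2 ?posrE //; lra.
Qed.

Lemma prod_split (R : realType) (q : nat) (x : 'I_q) (a : R) (g : 'I_q -> R) :
  \prod_(y in [set: 'I_q]%SET) (if y == x then a else g y) = a * \prod_(y < q | y != x) g y.
Proof.
rewrite (bigD1 x) ?in_setT // eqxx; congr (_ * _).
apply: eq_big => [y|y /andP[_ yx]]; first by rewrite !inE.
by rewrite (negbTE yx).
Qed.

Theorem lemma2p10 (R : realType) (d : measure_display) (Omega : measurableType d)
  (P : probability Omega R) (m q : nat) (hm : (0 < m)%N) (hq : (0 < q)%N)
  (r : 'I_q -> Omega -> R)
  (r_exp : forall x, has_exponential_law P 1 (r x))
  (r_indep : mutually_independent P r)
  (mu : 'I_m -> 'I_q -> R)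
  (mu_simplex : forall i, in_simplex (mu i)) :
  (P [set w | exists i j : 'I_m,
        GumbelTrick (mu i) (fun x => r x w) <> GumbelTrick (mu j) (fun x => r x w)]
  <= ((\sum_(x < q) (\big[Num.max/0]_(i < m) mu i x - \big[Num.min/1]_(i < m) mu i x))
      / (\sum_(x < q) \big[Num.max/0]_(i < m) mu i x))%:E)%E.
Proof.
set D := [set w | _].
have mr : forall y, measurable_fun setT (r y) := fun y => (r_exp y).1.
have mD : measurable D := meas_D d Omega R m q r mr mu.
set M := fun x => \big[Num.max/0]_(i < m) mu i x.
set A := fun x => \big[Num.min/1]_(i < m) mu i x.
have mu0 : forall i x, 0 <= mu i x := fun i x => (mu_simplex i).1 x.
have AL : forall i x, A x <= mu i x by move=> i x; exact: bigmin_le.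
have ML : forall i x, mu i x <= M x by move=> i x; exact: le_bigmax.
have A0 : forall x, 0 <= A x.
  by move=> x; apply: le_bigmin => // i _; exact: mu0.
pose i0 := Ordinal hm.
have AM : forall x, A x <= M x by move=> x; exact: le_trans (AL i0 x) (ML i0 x).
have sumA : \sum_x A x <= 1.
  rewrite -(mu_simplex i0).2; apply: ler_sum => x _; exact: AL.
set s := \sum_(x < q) M x.
have s1 : 1 <= s.
  rewrite -(mu_simplex i0).2; apply: ler_sum => x _; exact: ML.
have s0 : 0 < s by lra.
have RHS : (\sum_(x < q) (M x - A x)) / s = 1 - (\sum_x A x) / s.
  by rewrite sumrB -/s mulrBl mulfV ?gt_eqF.
rewrite RHS.
apply/lee_addgt0Pr => e e0.
have qpos : (0 < q%:R :> R) by rewrite ltr0n.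
pose de := e / 2.
have de0 : 0 < de by rewrite /de divr_gt0.
pose eta := e / (2 * q%:R).
have eta0 : 0 < eta by rewrite /eta divr_gt0 // mulr_gt0.
pose c x := \sum_(y < q | y != x) M y.
have c0 : forall x, 0 <= c x.
  by move=> x; apply: sumr_ge0 => y _; exact: le_trans (mu0 i0 y) (ML i0 y).
have sE : forall x, s = M x + c x by move=> x; rewrite /s (bigD1 x).
pose K := (\sum_(x < q) Num.bound ((eta * (A x + c x) * de)^-1))%N.
have HK : forall x, (eta * (A x + c x) * de)^-1 < K%:R.
  move=> x; apply: (lt_le_trans (archi_boundP _)).
    by rewrite invr_ge0 !mulr_ge0 ?addr_ge0 // ltW.
  by rewrite ler_nat /K (bigD1 x) //= leq_addr.
pose B (x : 'I_q) (k : nat) (y : 'I_q) : set R :=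
  if y == x then `]A x * (k%:R * de), A x * (k.+1%:R * de)]%classic
  else ~` `]-oo, M y * (k.+1%:R * de)]%classic.
have mB : forall x k y, measurable (B x k y).
  move=> x k y; rewrite /B; case: ifP => _; first exact: measurable_itv.
  by apply: measurableC; exact: measurable_itv.
pose Rk x k := \bigcap_(y in [set` [set: 'I_q]%SET]) (r y @^-1` B x k y).
have mR : forall x k, measurable (Rk x k).
  move=> x k; apply: fin_bigcap_measurable; first exact: finite_finset.
  move=> y _; exact: mpre.
pose U := \big[setU/set0]_(x < q) \big[setU/set0]_(k < K) Rk x k.
have memR : forall x k w, Rk x k w -> [/\ 0 < A x, A x * (k%:R * de) < r x w,
   r x w <= A x * (k.+1%:R * de) &
   forall y, y != x -> M y * (k.+1%:R * de) < r y w].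
  move=> x k w H.
  have Hy : forall y, B x k y (r y w).
    by move=> y; move: H; rewrite /Rk => /(_ y); apply; rewrite /= inE.
  have := Hy x; rewrite /B eqxx /= in_itv /= => /andP[h1 h2].
  have Ax : 0 < A x.
    case: (eqVneq (A x) 0) => [Ax0|Axn]; last by rewrite lt_def Axn A0.
    by move: (lt_le_trans h1 h2); rewrite Ax0 !mul0r ltxx.
  split => // y yx; have := Hy y; rewrite /B (negbTE yx) /= in_itv /= => h.
  by rewrite ltNge; apply/negP.
have DU : D `<=` ~` U.
  move=> w [i [j Hij]] /in_bigsetU [x /in_bigsetU [k Hk]].
  have [Ax h1 h2 h3] := memR x k w Hk.
  have t0 : 0 < k.+1%:R * de by rewrite mulr_gt0 // ltr0Sn.
  have rx0 : 0 <= r x w.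
    by apply: le_trans (ltW h1); rewrite mulr_ge0 // mulr_ge0 // ltW.
  have allx : forall i', GumbelTrick (mu i') (fun y => r y w) = Some x.
    move=> i'; apply: gt_some.
    exact: (key_lt R q (mu i') (fun y => r y w) M x (A x) (k.+1%:R * de) Ax (AL i' x) (ML i') (mu0 i') t0 rx0 h2 h3).
  by apply: Hij; rewrite !allx.
have PR : forall x k, P (Rk x k) =
  ((expR (- (A x * (k%:R * de))) - expR (- (A x * (k.+1%:R * de))))
     * expR (- (c x * (k.+1%:R * de))))%:E.
  move=> x k; rewrite /Rk (r_indep [set: 'I_q]%SET (B x k) (mB x k)).
  rewrite (eq_bigr (fun y => (if y == x then expR (- (A x * (k%:R * de)))
      - expR (- (A x * (k.+1%:R * de))) else expR (- (M y * (k.+1%:R * de))))%:E));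
    last first.
    move=> y _; rewrite /B; case: ifP => _.
      apply: itvprob; first exact: r_exp.
        by rewrite mulr_ge0 // mulr_ge0 // ltW.
      by apply: ler_wpM2l => //; apply: ler_wpM2r; [exact: ltW | rewrite ler_nat].
    apply: tail; first exact: r_exp.
    by rewrite mulr_ge0 ?mulr_ge0 ?(le_trans (mu0 i0 y) (ML i0 y)) // ltW.
  rewrite prodEFin; congr (_%:E).
  rewrite prod_split; congr (_ * _).
  rewrite /c mulr_suml -sumrN expR_sum.
  by apply: eq_bigr => y _.
have inner : forall x, P (\big[setU/set0]_(k < K) Rk x k) = (\sum_(k < K) P (Rk x k))%E.
  move=> x; apply: (@measure_bigsetU_ord _ _ _ P K xpredT (fun k => Rk x k)).
    by move=> k; exact: mR.
  move=> i j _ _ [w [Hi Hj]].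
  have [Ax h1 h2 _] := memR x i w Hi.
  have [_ h1' h2' _] := memR x j w Hj.
  apply/val_inj/eqP; rewrite eqn_leq.
  have l1 := nat_lt _ _ _ i j.+1 Ax de0 (lt_le_trans h1 h2').
  have l2 := nat_lt _ _ _ j i.+1 Ax de0 (lt_le_trans h1' h2).
  by rewrite -ltnS l1 -ltnS l2.
have outer : P U = (\sum_(x < q) P (\big[setU/set0]_(k < K) Rk x k))%E.
  apply: (@measure_bigsetU_ord _ _ _ P q xpredT (fun x => \big[setU/set0]_(k < K) Rk x k)).
    by move=> x; apply: bigsetU_measurable => k _; exact: mR.
  move=> x x' _ _ [w [/in_bigsetU [k Hk] /in_bigsetU [k' Hk']]].
  case: (eqVneq x x') => // xx'; exfalso.
  have [Ax h1 h2 h3] := memR x k w Hk.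
  have [Ax' h1' h2' h3'] := memR x' k' w Hk'.
  have Mx : 0 < M x := lt_le_trans Ax (AM x).
  have Mx' : 0 < M x' := lt_le_trans Ax' (AM x').
  have l1 : (k'.+1 < k.+1)%N.
    apply: (nat_lt _ _ _ _ _ Mx de0); apply: (lt_le_trans (h3' x xx')).
    apply: (le_trans h2); apply: ler_wpM2r; last exact: AM.
    by rewrite mulr_ge0 // ltW.
  have l2 : (k.+1 < k'.+1)%N.
    apply: (nat_lt _ _ _ _ _ Mx' de0); apply: (lt_le_trans (h3 x' _)).
      by rewrite eq_sym.
    apply: (le_trans h2'); apply: ler_wpM2r; last exact: AM.
    by rewrite mulr_ge0 // ltW.
  by move: (ltn_trans l1 l2); rewrite ltnn.
have PU : P U = (\sum_(x < q) \sum_(k < K)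
   ((expR (- (A x * (k%:R * de))) - expR (- (A x * (k.+1%:R * de))))
     * expR (- (c x * (k.+1%:R * de)))))%:E.
  rewrite outer -sumEFin; apply: eq_bigr => x _.
  by rewrite inner -sumEFin; apply: eq_bigr => k _; rewrite PR.
have mU : measurable U.
  by apply: bigsetU_measurable => x _; apply: bigsetU_measurable => k _; exact: mR.
have PDU : (P D <= P (~` U))%E.
  by apply: le_measure => //; rewrite inE //; exact: measurableC.
rewrite probability_setC // PU in PDU.
set S := \sum_(x < q) _ in PDU.
have Sx : forall x, A x / s - A x * de - eta <= \sum_(k < K)
   ((expR (- (A x * (k%:R * de))) - expR (- (A x * (k.+1%:R * de))))
     * expR (- (c x * (k.+1%:R * de)))).
  move=> x; apply: le_trans (geo _ _ _ _ _ K (A0 x) (c0 x) de0 eta0 (HK x)).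
  have := div_mono _ _ _ s (A0 x) (c0 x); rewrite (sE x).
  have := AM x; lra.
have Sge : (\sum_x A x) / s - e <= S.
  apply: le_trans (ler_sum _ (fun x _ => Sx x)).
  rewrite !sumrB sumr_const card_ord -!mulr_suml.
  have : (\sum_x A x) * de <= de.
    by rewrite -[X in _ <= X]mul1r ler_wpM2r // ltW.
  have -> : eta *+ q = e / 2.
    rewrite /eta -mulr_natr; field.
    by rewrite gt_eqF.
  rewrite /de; lra.
apply: le_trans PDU _.
have -> : (1 - S%:E)%E = (1 - S)%:E by rewrite EFinB.
rewrite -EFinD lee_fin; lra.
Qed.
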